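(* Let $n\ge2$ and let $\mathcal{C}([n])$ be the lattice of one-cluster partitions of $[n]$ ordered by refinement. Then for every $\pi\in\mathcal{C}([n])$, $$\mathfrak{m}(\pi,[n])=\begin{cases}(-1)^{n-1}(n-1)&\text{if }\pi=1|2|\cdots|n,\\(-1)^{|\pi|-1}&\text{otherwise},\end{cases}$$ where $|\pi|$ is the number of blocks of $\pi$.
   Context: A one-cluster partition of $[n]$ is a set partition with at most one block of size greater than one. The refinement order: $\pi\le\nu$ iff every block of $\pi$ is contained in a block of $\nu$. The Möbius function of a finite poset is defined by $\mathfrak{m}(\pi,\pi)=1$, $\mathfrak{m}(\pi,\nu)=-\sum_{\pi\le\delta<\nu}\mathfrak{m}(\pi,\delta)$ for $\pi<\nu$, and $0$ otherwise. *)

(* Defs.v *)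
From mathcomp Require Import all_boot all_order all_algebra.
Set Implicit Arguments. Unset Strict Implicit. Unset Printing Implicit Defensive.
Import GRing.Theory Num.Theory.

Definition set_partition (n : nat) (P : {set {set 'I_n}}) : bool :=
  partition P [set: 'I_n].

Definition one_cluster (n : nat) (P : {set {set 'I_n}}) : bool :=
  set_partition P && (#|[set B in P | 1 < #|B|]| <= 1).

Definition C_n (n : nat) : {set {set {set 'I_n}}} := [set P | one_cluster P].

Definition refines (n : nat) (P Q : {set {set 'I_n}}) : bool :=
  [forall B in P, exists C in Q, B \subset C].

Definition top_part (n : nat) : {set {set 'I_n}} := [set [set: 'I_n]].
Definition bot_part (n : nat) : {set {set 'I_n}} := [set [set i] | i : 'I_n].

(* Computed by recursion with fuel; fuel #|A|.+1 suffices since every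
   recursive call strictly descends along a chain in A. *)
Fixpoint mob_rec (T : finType) (A : {set T}) (le : rel T) (k : nat) (x y : T) : int :=
  match k with
  | 0 => 0%R
  | k'.+1 =>
    if x == y then 1%R
    else if le x y then
      (- (\sum_(d in A | le x d && le d y && (d != y)) mob_rec A le k' x d))%R
    else 0%R
  end.

Definition mobius (T : finType) (A : {set T}) (le : rel T) (x y : T) : int :=
  mob_rec A le #|A|.+1 x y.

(* Main.v *)
Require Import Defs.
From mathcomp Require Import all_boot all_order all_algebra.
Import GRing.Theory Num.Theory.
Set Implicit Arguments. Unset Strict Implicit. Unset Printing Implicit Defensive.

Section Part.
Variable n : nat.
Implicit Types (S T U : {set 'I_n}) (P Q : {set {set 'I_n}}).

Definition hb S (i : 'I_n) : {set 'I_n} := if i \in S then S else [set i].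
Definition part S : {set {set 'I_n}} := [set hb S i | i : 'I_n].
Definition clus P : {set 'I_n} := [set i | [exists B in P, (i \in B) && (1 < #|B|)]].

Lemma hb_mem S i : i \in hb S i.
Proof. by rewrite /hb; case: ifP => // _; rewrite set11. Qed.

Lemma hb_class S i j : (hb S i == hb S j) = (j \in hb S i).
Proof.
rewrite /hb; case: ifP => iS; case: ifP => jS; rewrite ?eqxx ?inE ?iS ?jS //.
all: try by apply/eqP => E; move: jS; rewrite -E ?iS ?set11.
all: try by apply/eqP => E; move: iS; rewrite E ?jS ?set11.
- apply/negbTE/eqP => E; move: (iS); rewrite E inE => /eqP ij.
  by rewrite -ij iS in jS.
- apply/eqP/eqP => [E|ji]; first by move: jS; rewrite -E inE => /eqP.
  by move: jS; rewrite ji iS.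
- by rewrite (inj_eq set1_inj) eq_sym.
Qed.

Lemma part_partition S : set_partition (part S).
Proof.
have -> : part S = preim_partition (hb S) [set: 'I_n].
  apply/setP => B; apply/imsetP/imsetP => [[i _ ->]|[i _ ->]]; exists i => //;
  by apply/setP => j; rewrite inE in_setT hb_class.
exact: preim_partitionP.
Qed.

Lemma hbP S i : hb S i = S \/ (hb S i = [set i] /\ i \notin S).
Proof. by rewrite /hb; case: ifP => iS; [left|right]. Qed.

Lemma part_C S : part S \in C_n n.
Proof.
rewrite inE /one_cluster part_partition /=.
apply: (@leq_trans #|[set S]|); last by rewrite cards1.
apply: subset_leq_card.
apply/subsetP => B; rewrite !inE => /andP[/imsetP[i _ ->]].
by case: (hbP S i) => [->|[-> _]]; rewrite ?eqxx // cards1.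
Qed.

Lemma S_in_part S i : i \in S -> S \in part S.
Proof. by move=> iS; apply/imsetP; exists i => //; rewrite /hb iS. Qed.

Lemma clus_part S : #|S| != 1 -> clus (part S) = S.
Proof.
move=> S1; apply/setP => i; rewrite inE; apply/existsP/idP => [[B]|iS].
  case/and3P=> /imsetP[j _ ->]; case: (hbP S j) => [->//|[-> _]].
  by rewrite cards1.
exists S; rewrite (S_in_part iS) iS /=.
by rewrite ltn_neqAle eq_sym S1 card_gt0; apply/set0Pn; exists i.
Qed.

Lemma part_inj S T : #|S| != 1 -> #|T| != 1 -> (part S == part T) = (S == T).
Proof.
move=> S1 T1; apply/eqP/eqP => [E|->//].
by rewrite -(clus_part S1) -(clus_part T1) E.
Qed.

Lemma refines_part S T : #|S| != 1 -> refines (part S) (part T) = (S \subset T).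
Proof.
move=> S1; apply/forall_inP/idP => [H|sST B /imsetP[i _ ->]].
  have [->|/set0Pn[i iS]] := eqVneq S set0; first exact: sub0set.
  have /existsP[C /andP[/imsetP[j _ ->]]] := H _ (S_in_part iS).
  case: (hbP T j) => [->//|[-> _] sSj].
  have : (#|S| <= 1)%N by rewrite -(cards1 j) subset_leq_card.
  rewrite leq_eqVlt (negbTE S1) /= ltnS leqn0 cards_eq0 => /eqP S0.
  by rewrite S0 inE in iS.
apply/existsP; exists (hb T i).
have -> : hb T i \in part T by apply/imsetP; exists i.
rewrite /=.
rewrite /hb; case: ifP => iS; first by rewrite (subsetP sST _ iS).
by rewrite sub1set hb_mem.
Qed.

Lemma card_part S : (1 < #|S|)%N -> #|part S| = #|~: S|.+1.
Proof.
move=> S2; have : (0 < #|S|)%N by apply: ltnW.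
rewrite card_gt0 => /set0Pn[x xS].
have -> : part S = S |: [set [set i] | i in ~: S].
  apply/setP => B; rewrite !inE; apply/imsetP/orP => [[i _ ->]|[/eqP->|/imsetP[i iS ->]]].
  - by case: (hbP S i) => [->|[-> iS]]; [left|right; apply/imsetP; exists i; rewrite ?inE].
  - by exists x; rewrite // /hb xS.
  - by exists i => //; rewrite /hb; rewrite inE in iS; rewrite (negbTE iS).
rewrite cardsU1 card_imset; last exact: set1_inj.
suff -> : S \notin [set [set i] | i in ~: S] by [].
apply/imsetP => [[i _ E]]; by rewrite E cards1 in S2.
Qed.

Lemma bot_partE : bot_part n = part set0.
Proof. by apply: eq_imset => i; rewrite /hb inE. Qed.

Lemma top_partE : (0 < n)%N -> top_part n = part setT.
Proof.
move=> n0; apply/setP => B; rewrite inE.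
apply/eqP/imsetP => [->|[i _ ->]]; last by rewrite /hb in_setT.
by exists (Ordinal n0) => //; rewrite /hb in_setT.
Qed.

Lemma part_clus P : P \in C_n n -> part (clus P) = P /\ #|clus P| != 1.
Proof.
rewrite inE /one_cluster /set_partition => /andP[/and3P[/eqP cov triv nos0] big].
set S := clus P.
have uniq_big B1 B2 : B1 \in P -> B2 \in P -> (1 < #|B1|)%N -> (1 < #|B2|)%N -> B1 = B2.
  move=> P1 P2 c1 c2; have /card_le1_eqP H := big; have := H B2 B1.
  by rewrite !inE P1 P2 c1 c2 => /(_ isT isT).
have key j : pblock P j = hb S j.
  have jc : j \in cover P by rewrite cov.
  have BP := pblock_mem jc; have jB : j \in pblock P j by rewrite mem_pblock.
  case: (ltnP 1 #|pblock P j|) => cB.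
    have jS : j \in S by rewrite inE; apply/existsP; exists (pblock P j); rewrite BP jB cB.
    rewrite /hb jS; apply/setP => i; rewrite inE; apply/idP/existsP => [iB|[B' /and3P[B'P iB' c']]].
      by exists (pblock P j); rewrite BP iB cB.
    by rewrite (uniq_big _ _ BP B'P cB c').
  have jS : j \notin S.
    rewrite inE; apply/existsP => [[B' /and3P[B'P jB' c']]].
    by move: cB; rewrite (def_pblock triv B'P jB') leqNgt c'.
  rewrite /hb (negbTE jS); apply/esym/eqP; rewrite eqEcard sub1set jB cards1 //.
have SP : part S = P.
  apply/setP => B; apply/imsetP/idP => [[j _ ->]|BP]; first by rewrite -key pblock_mem ?cov.
  have /set0Pn[j jB] : B != set0 by apply: contraNneq nos0 => <-.
  by exists j => //; rewrite -key (def_pblock triv BP jB).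
split=> //; apply/negP => /cards1P[x Sx].
have xS : x \in S by rewrite Sx set11.
have := xS; rewrite /S inE => /existsP[B' /and3P[B'P xB' c']].
move: c'; rewrite -(def_pblock triv B'P xB') key /hb.
by rewrite xS Sx cards1.
Qed.

End Part.

Local Open Scope ring_scope.

Section Mob.
Variables (T : finType) (A : {set T}) (le : rel T).
Hypothesis le_tr : {in A & &, forall a b c, le a b -> le b c -> le a c}.
Hypothesis le_as : {in A &, forall a b, le a b -> le b a -> a = b}.

Definition meas (y : T) := #|[set e in A | le e y && (e != y)]|.

Lemma meas_lt d y : d \in A -> y \in A -> le d y -> d != y -> (meas d < meas y)%N.
Proof.
move=> dA yA ldy ndy; apply: proper_card; apply/properP; split.
  apply/subsetP => e; rewrite !inE => /and3P[eA led ned].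
  rewrite eA (le_tr eA dA yA led ldy) /=.
  apply/eqP => ey; move: ned; rewrite ey => /negP; apply; apply/eqP.
  by apply: le_as => //; rewrite -ey.
by exists d; rewrite !inE ?dA ?ldy ?ndy ?eqxx // andbF.
Qed.

Lemma fuel_ok x k y : y \in A -> (meas y < k)%N ->
  mob_rec A le k x y = mob_rec A le k.+1 x y.
Proof.
elim: k y => [//|k IH] y yA mk /=.
case: (x == y) => //; case: (le x y) => //; congr (- _).
apply: eq_bigr => d /andP[dA /andP[/andP[_ ldy] ndy]].
apply: IH => //. exact: leq_trans (meas_lt dA yA ldy ndy) mk.
Qed.

Lemma meas_le y : (meas y <= #|A|)%N.
Proof. by apply: subset_leq_card; apply/subsetP => e; rewrite inE => /andP[]. Qed.

Lemma mobiusE x y : y \in A ->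
  mobius A le x y = if x == y then 1 else if le x y then
    - \sum_(d in A | le x d && le d y && (d != y)) mobius A le x d else 0.
Proof.
move=> yA; rewrite /mobius /=.
case: (x == y) => //; case: (le x y) => //; congr (- _).
apply: eq_bigr => d /andP[dA /andP[/andP[_ ldy] ndy]].
apply: fuel_ok => //; exact: leq_trans (meas_lt dA yA ldy ndy) (meas_le y).
Qed.
End Mob.

Section Sums.
Variable T : finType.
Implicit Types (S R U : {set T}).

Lemma split_sum (F : {set T} -> int) S R r : r \in R -> r \notin S ->
  \sum_(U : {set T} | (S \subset U) && (U \subset R)) F U =
  \sum_(U : {set T} | (S \subset U) && (U \subset R :\ r)) (F U + F (r |: U)).
Proof.
move=> rR rS; rewrite (bigID (fun U => r \in U)) /= addrC big_split /=.
congr (_ + _).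
  by apply: eq_bigl => U; rewrite subsetD1 andbA.
rewrite (reindex_onto (fun U => r |: U) (fun U => U :\ r)) /=; last first.
  by move=> U /andP[_ rU]; rewrite setD1K.
apply: eq_bigl => U; rewrite setU11 andbT.
have [rU|rU] := boolP (r \in U).
  rewrite subsetD1 rU !andbF.
  suff -> : ((r |: U) :\ r == U) = false by rewrite andbF.
  apply/negbTE/eqP => E.
  by have := setD11 r (r |: U); rewrite E rU.
rewrite setU1K // eqxx andbT subsetD1 rU andbT subUset sub1set rR /=.
congr (_ && _); apply/idP/idP => H; last exact: subset_trans H (subsetU1 _ _).
apply/subsetP => x xS; have := subsetP H x xS; rewrite !inE => /orP[/eqP xr|//].
by rewrite -xr xS in rS.
Qed.

Lemma alt_zero S R : S \subset R -> S != R ->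
  \sum_(U : {set T} | (S \subset U) && (U \subset R)) (-1) ^+ #|U :\: S| = 0 :> int.
Proof.
move=> sSR nSR.
have /set0Pn[r] : R :\: S != set0.
  by apply: contraNneq nSR => /eqP; rewrite setD_eq0 => sRS; rewrite eqEsubset sSR.
rewrite inE => /andP[rS rR].
rewrite (split_sum _ rR rS) big1 // => U /andP[_ sUR].
have rU : r \notin U by move: sUR; rewrite subsetD1 => /andP[].
have -> : (r |: U) :\: S = r |: (U :\: S).
  apply/setP => i; rewrite !inE; case: (eqVneq i r) => [->|] //=.
  by rewrite rS.
by rewrite cardsU1 inE (negbTE rU) andbF /= exprS mulN1r addrN.
Qed.

Definition G U : int := (-1) ^+ #|U| * (1 - (#|U|)%:Z).

Lemma G_zero R : (1 < #|R|)%N ->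
  \sum_(U : {set T} | (set0 \subset U) && (U \subset R)) G U = 0.
Proof.
move=> R2; have : (0 < #|R|)%N by apply: ltnW.
rewrite card_gt0 => /set0Pn[r rR].
rewrite (split_sum _ rR (negbT (in_set0 r))).
rewrite (eq_bigr (fun U => (-1) ^+ #|U :\: set0|)); last first.
  move=> U /andP[_ sUR].
  have rU : r \notin U by move: sUR; rewrite subsetD1 => /andP[].
  rewrite /G setD0 cardsU1 rU add1n exprS mulN1r.
  rewrite -addn1 PoszD opprD addrA.
  set a := (-1) ^+ #|U|; set b := (#|U|)%:Z.
  rewrite mulNr -mulrBr [X in a * X](_ : _ = 1) ?mulr1 //.
  by rewrite opprB addrCA subrr addr0.
apply: alt_zero; first exact: sub0set.
by apply/eqP => E; move: R2; rewrite (cardsD1 r R) rR -E cards0.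
Qed.
End Sums.

Section Main.
Variable n : nat.

Lemma le_tr : {in C_n n & &, forall a b c, refines a b -> refines b c -> refines a c}.
Proof.
move=> a b c _ _ _ /forall_inP Hab /forall_inP Hbc; apply/forall_inP => B Ba.
have /existsP[C /andP[Cb BC]] := Hab B Ba.
have /existsP[D /andP[Dc CD]] := Hbc C Cb.
by apply/existsP; exists D; rewrite Dc (subset_trans BC CD).
Qed.

Lemma le_as : {in C_n n &, forall a b, refines a b -> refines b a -> a = b}.
Proof.
move=> a b /part_clus[Ea a1] /part_clus[Eb b1].
rewrite -Ea -Eb !refines_part // => sab sba.
by congr part; apply/eqP; rewrite eqEsubset sab sba.
Qed.

Lemma Cimage : C_n n = @part n @: [set S : {set 'I_n} | #|S| != 1].
Proof.
apply/setP => P; apply/idP/imsetP => [HP|[S _ ->]]; last exact: part_C.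
by have [E S1] := part_clus HP; exists (clus P); rewrite ?inE.
Qed.

Lemma reindex (c : pred {set {set 'I_n}}) (F : {set {set 'I_n}} -> int) :
  \sum_(d in C_n n | c d) F d =
  \sum_(S : {set 'I_n} | (#|S| != 1) && c (part S)) F (part S).
Proof.
rewrite big_mkcondr Cimage big_imset /=; last first.
  by move=> S T; rewrite !inE => S1 T1 /eqP; rewrite part_inj // => /eqP.
rewrite [RHS]big_mkcondr; apply: eq_bigl => S; by rewrite inE.
Qed.

Lemma claimA (S : {set 'I_n}) : (1 < #|S|)%N -> forall T : {set 'I_n}, S \subset T ->
  mobius (C_n n) (@refines n) (part S) (part T) = (-1) ^+ #|T :\: S|.
Proof.
move=> S2 T; have [k] := ubnP #|T|; elim: k T => // k IH T Tk sST.
rewrite ltnS in Tk.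
have S1 : #|S| != 1 by rewrite neq_ltn S2 orbT.
have T1 : #|T| != 1.
  by rewrite neq_ltn (leq_trans S2 (subset_leq_card sST)) orbT.
rewrite (mobiusE le_tr le_as) ?part_C // part_inj //.
have [<-|nST] := eqVneq S T; first by rewrite setDv cards0 expr0.
rewrite refines_part // sST reindex.
rewrite (eq_bigl (fun U : {set 'I_n} => (S \subset U) && (U \subset T) && (U != T))) => [|U]; last first.
  have [U1|U1] := eqVneq #|U| 1.
    rewrite /=; apply/esym/negbTE/negP => /andP[/andP[sSU _] _].
    by move: (subset_leq_card sSU); rewrite U1 leqNgt S2.
  by rewrite /= !refines_part // part_inj.
rewrite (eq_bigr (fun U : {set 'I_n} => (-1) ^+ #|U :\: S|)) => [|U /andP[/andP[sSU sUT] nUT]]; last first.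
  apply: IH => //; apply: leq_trans (proper_card _) Tk.
  by rewrite properEneq nUT sUT.
have := alt_zero sST nST; rewrite (bigD1 T) /= ?sST ?subxx //.
by move/eqP; rewrite addrC addr_eq0 => /eqP ->; rewrite opprK.
Qed.

Lemma claimB (T : {set 'I_n}) : #|T| != 1 ->
  mobius (C_n n) (@refines n) (part set0) (part T) = G T.
Proof.
have [k] := ubnP #|T|; elim: k T => // k IH T Tk T1.
rewrite ltnS in Tk.
have S1 : #|@set0 'I_n| != 1 by rewrite cards0.
rewrite (mobiusE le_tr le_as) ?part_C // part_inj //.
have [<-|nT] := eqVneq set0 T; first by rewrite /G cards0.
have T2 : (1 < #|T|)%N.
  by rewrite ltn_neqAle eq_sym T1 card_gt0 eq_sym.
rewrite refines_part // sub0set reindex.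
have -> : \sum_(U : {set 'I_n} | (#|U| != 1) && (refines (part set0) (part U)
     && refines (part U) (part T) && (part U != part T)))
     mobius (C_n n) (@refines n) (part set0) (part U)
   = \sum_(U : {set 'I_n} | (set0 \subset U) && (U \subset T) && (U != T)) G U.
  rewrite big_mkcond [RHS]big_mkcond; apply: eq_bigr => U _.
  have [U1|U1] := eqVneq #|U| 1.
    by rewrite /G U1 subrr mulr0 /=; case: ifP.
  rewrite /= !refines_part // part_inj // sub0set /=.
  case: ifP => // /andP[sUT nUT]; apply: IH => //.
  apply: leq_trans (proper_card _) Tk.
  by rewrite properEneq nUT sUT.
have := G_zero T2; rewrite (bigD1 T) /= ?sub0set ?subxx //.
by move/eqP; rewrite addrC addr_eq0 => /eqP ->; rewrite opprK.
Qed.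

End Main.

Theorem mainTheorem11 (n : nat) (hn : (2 <= n)%N)
  (pi : {set {set 'I_n}}) (hpi : pi \in C_n n) :
  mobius (C_n n) (@refines n) pi (top_part n) =
  (if pi == bot_part n then (-1) ^+ (n - 1) * (n - 1)%:Z
   else (-1) ^+ (#|pi| - 1)).
Proof.
have [SP S1] := part_clus hpi.
have n0 : (0 < n)%N by apply: leq_trans hn.
rewrite -SP top_partE // bot_partE part_inj ?cards0 //.
have [E|nS] := eqVneq (clus pi) set0.
  rewrite E claimB; last by rewrite cardsT card_ord neq_ltn hn orbT.
  rewrite /G cardsT card_ord.
  have -> : n = (n - 1).+1 by rewrite subn1 prednK.
  rewrite subSS subn0 exprS mulN1r mulNr -mulrN; congr (_ * _).
  by rewrite opprB -addn1 PoszD addrK.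
have S2 : (1 < #|clus pi|)%N.
  by rewrite ltn_neqAle eq_sym S1 card_gt0.
by rewrite claimA ?subsetT // card_part // setTD subn1.
Qed.
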